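(* Let $X$ be an idempotent unital commutative semiring whose intrinsic order is linear, i.e. $x\le y$ or $y\le x$ for all $x,y\in X$. Then $X$ is Frobenius.
   Context: A semiring $(X,+,0,\cdot)$: $(X,+,0)$ commutative monoid, $(X,\cdot)$ semigroup, distributivity, $0$ absorbing. Idempotent: $x+x=x$ for all $x$. Intrinsic order: $a\le b$ iff $a+x=b$ for some $x\in X$. $X$ is Frobenius if $(x+y)^n=x^n+y^n$ for all $x,y\in X$ and all integers $n\ge1$. *)

(* Defs.v *)
From mathcomp Require Import all_boot all_algebra.
Set Implicit Arguments. Unset Strict Implicit. Unset Printing Implicit Defensive.
Import GRing.Theory.
Local Open Scope ring_scope.

(* Semirings: MathComp's comPzSemiRingType = commutative monoid (+,0),
   commutative associative multiplication with unit 1, distributivity,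
   0 absorbing.  (Pz: 0 = 1 allowed.) *)

Definition idempotent_sr (X : comPzSemiRingType) : Prop :=
  forall x : X, x + x = x.

Definition sr_le (X : comPzSemiRingType) (a b : X) : Prop :=
  exists x : X, a + x = b.

Definition linear_intrinsic_order (X : comPzSemiRingType) : Prop :=
  forall x y : X, sr_le x y \/ sr_le y x.

Definition frobenius (X : comPzSemiRingType) : Prop :=
  forall (x y : X) (n : nat), (1 <= n)%N -> (x + y) ^+ n = x ^+ n + y ^+ n.

(* Main.v *)
Require Import Defs.
From mathcomp Require Import all_boot all_algebra.
Import GRing.Theory.
Local Open Scope ring_scope.

Lemma aux (X : comPzSemiRingType) (x y : X) (n : nat) :
  idempotent_sr X -> x + y = y -> x ^+ n + y ^+ n = y ^+ n.
Proof.
move=> hid hxy; elim: n => [|n IH].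
  by rewrite !expr0 hid.
have He : y ^+ n.+1 = x * x ^+ n + y ^+ n.+1.
  by rewrite {1}exprS -{1}hxy mulrDl -{1}IH mulrDr -addrA -mulrDl hxy -!exprS.
by rewrite [x ^+ n.+1]exprS -He.
Qed.

Theorem proposition3p2 (X : comPzSemiRingType) :
  idempotent_sr X -> linear_intrinsic_order X -> frobenius X.
Proof.
move=> hid hlin x y n _.
have le_e : forall a b : X, sr_le a b -> a + b = b.
  by move=> a b [c <-]; rewrite addrA hid.
case: (hlin x y) => [/le_e h | /le_e h].
  by rewrite h (@aux X _ _ n hid h).
by rewrite addrC h addrC (@aux X _ _ n hid h).
Qed.
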